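(* Let $\epsilon>0$, $\delta>0$, and let $\rho$ be a pure $n$-qubit state. Then $N=O(n\log(1/\delta)/\epsilon^2)$ pairs of copies $\rho\otimes\rho$ suffice to produce, with probability $1-\delta$, estimates $\pi_\rho(x_{1:k})$ such that $|\pi_\rho(x_{1:k})-p_\rho(x_{1:k})|\le\epsilon/2^k$ simultaneously for all $x\in\{0,1\}^{2n}$ and all $1\le k\le n$.
   Context: Pauli strings are labelled by $x=(x_1,\dots,x_n)$ with $x_i=(v_i,w_i)\in\{0,1\}^2$, via $P_x=i^{v\cdot w}(X^{v_1}Z^{w_1})\otimes\cdots\otimes(X^{v_n}Z^{w_n})$. The Pauli distribution of a pure state is $p_\rho(x)=\mathrm{tr}(\rho P_x)^2/2^n$ on $\{0,1\}^{2n}$, and $p_\rho(x_{1:k})=\sum_{x_{k+1},\dots,x_n}p_\rho(x)$ is the marginal on the first $k$ qubit labels $x_1,\dots,x_k$ (each $x_i$ a pair of bits). *)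

(* Defs.v *)
From HB Require Import structures.
From mathcomp Require Import all_boot all_order all_algebra.
From mathcomp Require Import reals exp complex.
Set Implicit Arguments. Unset Strict Implicit. Unset Printing Implicit Defensive.
Import Order.TTheory GRing.Theory Num.Theory.
Local Open Scope ring_scope.
Local Open Scope complex_scope.

Definition qbasis (n : nat) := {ffun 'I_n -> bool}.
Definition plabel (n : nat) := {ffun 'I_n -> bool * bool}.

Section Quantum.
Variable R : realType.
Local Notation C := R[i].

(* single qubit matrix entry  <a| X^v Z^w |b> = [a = b xor v] (-1)^(w b) *)
Definition pauli1 (v w a b : bool) : C :=
  if a == addb b v then (if w && b then -1 else 1) else 0.

(* <a| P_x |b>, P_x = i^(v.w) (X^v1 Z^w1) (x) ... (x) (X^vn Z^wn) *)
Definition pauli_entry (n : nat) (x : plabel n) (a b : qbasis n) : C :=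
  'i ^+ (\sum_(i < n) nat_of_bool ((x i).1 && (x i).2))%N
  * \prod_(i < n) pauli1 (x i).1 (x i).2 (a i) (b i).

Definition is_pure_state (n : nat) (psi : qbasis n -> C) : Prop :=
  \sum_(b : qbasis n) (psi b)^* * psi b = 1.

(* tr(rho P_x) = <psi| P_x |psi> for rho = |psi><psi| *)
Definition pauli_expect (n : nat) (psi : qbasis n -> C) (x : plabel n) : C :=
  \sum_(a : qbasis n) \sum_(b : qbasis n) (psi a)^* * pauli_entry x a b * psi b.

Definition pauli_dist (n : nat) (psi : qbasis n -> C) (x : plabel n) : R :=
  complex.Re ((pauli_expect psi x) ^+ 2) / 2 ^+ n.

Definition pauli_prefix (n : nat) (k : 'I_n.+1) (x : plabel n) : {ffun 'I_k -> bool * bool} :=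
  [ffun i : 'I_k => x (widen_ord (ltnSE (ltn_ord k)) i)].

Definition pauli_marginal (n : nat) (psi : qbasis n -> C) (k : 'I_n.+1)
  (x : plabel n) : R :=
  \sum_(y : plabel n | pauli_prefix k y == pauli_prefix k x) pauli_dist psi y.

(* Basis of the Hilbert space of N pairs of copies, (rho (x) rho)^{(x) N} *)
Definition pairs_basis (n N : nat) := {ffun 'I_N -> qbasis n * qbasis n}.

Definition pairs_state (n N : nat) (psi : qbasis n -> C) (f : pairs_basis n N) : C :=
  \prod_(j < N) (psi (f j).1 * psi (f j).2).

Definition is_povm (I O : finType) (M : O -> I -> I -> C) : Prop :=
  (forall (o : O) (v : I -> C),
      0 <= \sum_(i : I) \sum_(j : I) (v i)^* * M o i j * v j)
  /\ (forall i j : I, \sum_(o : O) M o i j = (i == j)%:R).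

Definition povm_prob (I O : finType) (M : O -> I -> I -> C) (Psi : I -> C) (o : O) : C :=
  \sum_(i : I) \sum_(j : I) (Psi i)^* * M o i j * Psi j.

End Quantum.

(* Main.v *)
Require Import Defs.
From HB Require Import structures.
From mathcomp Require Import all_boot all_order all_algebra.
From mathcomp Require Import reals exp complex sequences.
From mathcomp Require Import ring lra zify.
Set Implicit Arguments. Unset Strict Implicit. Unset Printing Implicit Defensive.
Import Order.TTheory GRing.Theory Num.Theory.
Local Open Scope ring_scope.
Local Open Scope complex_scope.

Lemma exp_bound (R : realType) (x : R) : x <= 1/2 -> expR x <= 1 + x + 2 * x ^+ 2.
Proof.
move=> hx.
have h1 : 0 < 1 - x by rewrite subr_gt0 (le_lt_trans hx) // ltr_pdivrMr // mul1r ltr1n.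
have h2 : 1 - x <= expR (- x) by have := expR_ge1Dx (- x).
rewrite -(ler_pM2r h1).
have h3 : expR x * (1 - x) <= 1.
  have e : expR x * expR (- x) = 1 by rewrite -expRD subrr expR0.
  by apply: (le_trans (y := expR x * expR (- x))); [rewrite ler_pM2l ?expR_gt0 | rewrite e].
apply: (le_trans h3).
have h4 : 0 <= x ^+ 2 * (1 - 2 * x) by rewrite mulr_ge0 ?sqr_ge0 // subr_ge0 -ler_pdivlMl // mulrC.
have -> : (1 + x + 2 * x ^+ 2) * (1 - x) = 1 + x ^+ 2 * (1 - 2 * x) by ring.
by rewrite lerDl.
Qed.

Section Prob.
Variables (R : realType) (Y : finType) (q : Y -> R).
Hypothesis q0 : forall y, 0 <= q y.
Hypothesis q1 : \sum_y q y = 1.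
Variable N : nat.

Definition PP (o : {ffun 'I_N -> Y}) : R := \prod_j q (o j).

Lemma PP_ge0 o : 0 <= PP o.
Proof. by apply: prodr_ge0 => j _. Qed.

Lemma PP_prod (F : Y -> R) :
  \sum_(o : {ffun 'I_N -> Y}) PP o * \prod_j F (o j) = (\sum_y q y * F y) ^+ N.
Proof.
have -> : (\sum_y q y * F y) ^+ N = \prod_(j < N) \sum_y q y * F y
  by rewrite prodr_const card_ord.
rewrite bigA_distr_bigA /=.
by apply: eq_bigr => o _; rewrite /PP -big_split.
Qed.

Lemma PP_sum1 : \sum_o PP o = 1.
Proof.
transitivity (\sum_(o : {ffun 'I_N -> Y}) PP o * \prod_(j < N) (fun _ => (1:R)) (o j)).
  by apply: eq_bigr => o _; rewrite big1_eq mulr1.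
rewrite (PP_prod (fun _ => 1)).
by under eq_bigr do rewrite mulr1; rewrite q1 expr1n.
Qed.




Lemma mgf (Z : Y -> R) lam : (forall y, `|Z y| <= 1) -> \sum_y q y * Z y = 0 ->
  0 <= lam <= 1/2 -> \sum_y q y * expR (lam * Z y) <= expR (2 * lam ^+ 2).
Proof.
move=> hZ hm /andP[l0 l1].
apply: (le_trans (y := \sum_y q y * (1 + lam * Z y + 2 * lam ^+ 2))).
  apply: ler_sum => y _; apply: ler_wpM2l => //.
  have hz := hZ y; move: hz; rewrite ler_norml => /andP[z1 z2].
  have hl : lam * Z y <= lam by rewrite -{2}(mulr1 lam) ler_wpM2l.
  apply: (le_trans (exp_bound _)); first exact: le_trans hl l1.
  rewrite lerD2l ler_wpM2l // exprMn -{2}(mulr1 (lam ^+ 2)) ler_wpM2l ?sqr_ge0 //.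
  nra.
rewrite (eq_bigr (fun y => q y + lam * (q y * Z y) + 2 * lam ^+ 2 * q y)); last first.
  by move=> y _; ring.
rewrite !big_split /= -!mulr_sumr hm q1 mulr0 addr0 mulr1.
by rewrite ?(addrC (2 * _)) expR_ge1Dx.
Qed.

Lemma chernoff (Z : Y -> R) a : (forall y, `|Z y| <= 1) -> \sum_y q y * Z y = 0 ->
  0 <= a <= 2 ->
  \sum_(o : {ffun 'I_N -> Y} | N%:R * a <= \sum_j Z (o j)) PP o
     <= expR (- (N%:R * a ^+ 2 / 8)).
Proof.
move=> hZ hm /andP[a0 a2].
set lam := a / 4.
apply: (le_trans (y := \sum_o PP o * expR (lam * (\sum_j Z (o j) - N%:R * a)))).
  rewrite big_mkcond; apply: ler_sum => o _.
  case: ifP => hc; last by rewrite mulr_ge0 ?PP_ge0 ?expR_ge0.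
  rewrite -{1}(mulr1 (PP o)) ler_wpM2l ?PP_ge0 //.
  apply: (le_trans _ (expR_ge1Dx _)); rewrite lerDl mulr_ge0 ?subr_ge0 //.
  by rewrite /lam divr_ge0.
rewrite (eq_bigr (fun o => expR (- (lam * (N%:R * a))) * (PP o * \prod_j expR (lam * Z (o j))))); last first.
  move=> o _; rewrite mulrBr expRD mulr_sumr expR_sum; ring.
rewrite -mulr_sumr (PP_prod (fun y => expR (lam * Z y))).
apply: (le_trans (y := expR (- (lam * (N%:R * a))) * expR (2 * lam ^+ 2) ^+ N)).
  rewrite ler_wpM2l ?expR_ge0 // lerXn2r ?nnegrE ?expR_ge0 //.
    by rewrite sumr_ge0 // => y _; rewrite mulr_ge0 ?expR_ge0.
  apply: mgf => //; rewrite /lam divr_ge0 //=; lra.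
rewrite -expRM_natl -expRD ler_expR /lam.
rewrite le_eqVlt; apply/orP; left; apply/eqP; field.
by [].
Qed.

Lemma deviation (X : Y -> R) c eps : 0 < c -> (forall y, `|X y| <= c) ->
  0 < eps <= 2 -> (0 < N)%N ->
  \sum_(o : {ffun 'I_N -> Y} | eps * c < `|N%:R^-1 * \sum_j X (o j) - \sum_y q y * X y|) PP o
    <= 2 * expR (- (N%:R * eps ^+ 2 / 32)).
Proof.
move=> c0 hX /andP[e0 e2] N0.
set mu := \sum_y q y * X y.
have hmu : `|mu| <= c.
  apply: (le_trans (ler_norm_sum _ _ _)).
  apply: (le_trans (y := \sum_y q y * c)).
    by apply: ler_sum => y _; rewrite normrM ger0_norm // ler_wpM2l.
  by rewrite -mulr_suml q1 mul1r.
set Z := fun y => (X y - mu) / (2 * c).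
have c2 : 0 < 2 * c by rewrite mulr_gt0.
have hZ : forall y, `|Z y| <= 1.
  move=> y; rewrite /Z normrM normfV (ger0_norm (ltW c2)) ler_pdivrMr // mul1r.
  apply: (le_trans (ler_normB _ _)).
  by have := hX y; lra.
have hZm : \sum_y q y * Z y = 0.
  rewrite /Z (eq_bigr (fun y => (q y * X y - mu * q y) / (2 * c))); last by move=> y _; rewrite mulrA mulrBr (mulrC (q y) mu).
  by rewrite -mulr_suml sumrB -mulr_sumr q1 mulr1 subrr mul0r.
have hZ' : forall y, `|(fun y => - Z y) y| <= 1 by move=> y; rewrite normrN.
have hZm' : \sum_y q y * (fun y => - Z y) y = 0.
  by under eq_bigr do rewrite mulrN; rewrite sumrN hZm oppr0.
have ha : 0 <= eps / 2 <= 2 by apply/andP; split; lra.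
have C1 := chernoff hZ hZm ha.
have C2 := chernoff hZ' hZm' ha.
have -> : 2 * expR (- (N%:R * eps ^+ 2 / 32)) =
   expR (- (N%:R * (eps / 2) ^+ 2 / 8)) + expR (- (N%:R * (eps / 2) ^+ 2 / 8)).
  by rewrite (_ : N%:R * eps ^+ 2 / 32 = N%:R * (eps/2) ^+ 2 / 8); [ring | field].
apply: (le_trans _ (lerD C1 C2)).
rewrite big_mkcond [X in _ <= X + _]big_mkcond [X in _ <= _ + X]big_mkcond -big_split /=.
apply: ler_sum => o _.
case: ifP => hb; last by rewrite addr_ge0 //; case: ifP => _; rewrite ?PP_ge0.
have N0' : (0 : R) < N%:R by rewrite ltr0n.
have eS : N%:R^-1 * \sum_j X (o j) - mu = (2 * c) / N%:R * \sum_j Z (o j).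
  rewrite /Z -mulr_suml sumrB sumr_const card_ord.
  field; by rewrite ?pnatr_eq0 -?lt0n ?N0 ?(gt_eqF c0) ?(gt_eqF c2).
move: hb; rewrite eS normrM (ger0_norm (ltW (divr_gt0 c2 N0'))).
set S := \sum_j Z (o j) => hb.
have hS : N%:R * (eps / 2) < `|S|.
  rewrite -(ltr_pM2l (divr_gt0 c2 N0')) (_ : 2 * c / N%:R * (N%:R * (eps / 2)) = eps * c) //.
  by field; rewrite pnatr_eq0 -lt0n N0.
case: ifP => h1.
  by rewrite lerDl; case: ifP => _; rewrite ?PP_ge0.
have h2 : N%:R * (eps / 2) <= \sum_j - Z (o j).
  move/negbT: h1; rewrite -ltNge => h1.
  rewrite sumrN; move: hS h1; rewrite /S; case: (ger0P (\sum_j Z (o j))) => hs hS h1; lra.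
by rewrite h2 add0r.
Qed.

End Prob.

Lemma prod_eq_ind (S : comPzRingType) (I : finType) (T : eqType) (f g : {ffun I -> T}) :
  \prod_i ((f i == g i)%:R : S) = (f == g)%:R.
Proof.
case: eqP => [->|ne]; first by rewrite big1 // => i _; rewrite eqxx.
have [i hi] : exists i, f i != g i.
  apply/existsP; apply: contraT; rewrite negb_exists => /forallP h.
  by case: ne; apply/ffunP => i; apply/eqP; have := h i; rewrite negbK.
by rewrite (bigD1 i) //= (negbTE hi) mul0r.
Qed.

Lemma natr_andb (S : pzSemiRingType) (b c : bool) : ((b && c)%:R : S) = b%:R * c%:R.
Proof. by case: b c => [] []; rewrite ?mulr1 ?mulr0 ?mul0r. Qed.

Lemma sum_bb (V : nmodType) (G : bool * bool -> V) :
  \sum_t G t = G (true, true) + G (true, false) + (G (false, true) + G (false, false)).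
Proof.
transitivity (\sum_(t : bool * bool) G (t.1, t.2)); first by apply: eq_bigr => -[].
by rewrite -(pair_bigA _ (fun u v => G (u, v))) /= big_bool /= !big_bool /=.
Qed.

Lemma exprn_sum (S : pzSemiRingType) (x : S) (I : finType) (f : I -> nat) :
  x ^+ (\sum_i f i)%N = \prod_i x ^+ f i.
Proof. by rewrite (big_morph _ (exprD x) (expr0 x)). Qed.

Lemma expand4 (S : comPzRingType) (I J K L : finType) (c : S) (A : I -> J -> S) (B : K -> L -> S) :
  c * (\sum_i \sum_j A i j) * (\sum_k \sum_l B k l) =
  \sum_i \sum_j \sum_k \sum_l c * A i j * B k l.
Proof.
rewrite -mulrA big_distrl /= mulr_sumr; apply: eq_bigr => i _.
rewrite big_distrl /= mulr_sumr; apply: eq_bigr => j _.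
rewrite mulr_sumr mulr_sumr; apply: eq_bigr => k _.
by rewrite mulr_sumr mulr_sumr; apply: eq_bigr => l _; rewrite !mulrA.
Qed.

Lemma exch5 (S : nmodType) (Y I J K L : finType) (F : Y -> I -> J -> K -> L -> S) :
  \sum_y \sum_i \sum_j \sum_k \sum_l F y i j k l =
  \sum_i \sum_j \sum_k \sum_l \sum_y F y i j k l.
Proof.
rewrite exchange_big; apply: eq_bigr => i _.
rewrite exchange_big; apply: eq_bigr => j _.
rewrite exchange_big; apply: eq_bigr => k _.
by rewrite exchange_big.
Qed.

Section Quantum.
Variable R : realType.
Local Notation C := R[i].

Definition b0 (t : bool * bool) (a b : bool) : R :=
  if b == addb a t.1 then (if t.2 && a then -1 else 1) else 0.
Definition lam1 (t x : bool * bool) : R :=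
  (-1) ^+ ((x.1 && x.2) + (x.1 && t.2) + (x.2 && t.1))%N.
Definition pr (p q a b : bool) : R :=
  if a == addb b p then (if q && b then -1 else 1) else 0.

Lemma pauli1E p q a b : pauli1 R p q a b = (pr p q a b)%:C.
Proof. by rewrite /pauli1 /pr; case: (a == _); case: (q && b); rewrite ?rmorphN1 ?rmorph1 ?rmorph0. Qed.

Lemma b0_compl a a' b b' :
  \sum_t b0 t a a' * b0 t b b' = 2 * ((a == b) && (a' == b'))%:R.
Proof. rewrite sum_bb; case: a a' b b' => [] [] [] []; rewrite /b0 /=; ring. Qed.

Lemma pr_lam p q a b a' b' :
  (-1) ^+ (p && q) * (pr p q a b * pr p q a' b') =
  2^-1 * \sum_t lam1 t (p, q) * b0 t a a' * b0 t b b'.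
Proof.
rewrite sum_bb; case: p q a b a' b' => [] [] [] [] [] []; rewrite /pr /lam1 /b0 /=; field; done.
Qed.

Variable n : nat.

Definition phi (y : plabel n) (ab : qbasis n * qbasis n) : R :=
  \prod_i b0 (y i) (ab.1 i) (ab.2 i).
Definition lamx (y x : plabel n) : R := \prod_i lam1 (y i) (x i).

Lemma entry2 (x : plabel n) (a b a' b' : qbasis n) :
  pauli_entry R x a b * pauli_entry R x a' b' =
  ((2 ^+ n)^-1 * \sum_y lamx y x * phi y (a, a') * phi y (b, b'))%:C.
Proof.
have hi : forall i, (-1 : C) ^+ ((x i).1 && (x i).2) *
    (pauli1 R (x i).1 (x i).2 (a i) (b i) * pauli1 R (x i).1 (x i).2 (a' i) (b' i)) =
    (2^-1 * \sum_t lam1 t (x i) * b0 t (a i) (a' i) * b0 t (b i) (b' i))%:C.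
  move=> i; case: (x i) => p q /=.
  by rewrite -pr_lam !pauli1E rmorphM rmorphXn rmorphN1 rmorphM.
rewrite /pauli_entry mulrACA -exprMn -expr2 sqr_i exprn_sum -big_split /=.
rewrite -big_split /=.
rewrite (eq_bigr _ (fun i _ => hi i)) -rmorph_prod; congr (_%:C).
rewrite big_split /= prodr_const card_ord exprVn; congr (_ * _).
rewrite bigA_distr_bigA /=; apply: eq_bigr => y _.
by rewrite /lamx /phi /= -!big_split.
Qed.

Definition sq (z : C) : R := (complex.Re z) ^+ 2 + (complex.Im z) ^+ 2.

Lemma conj_mul_sq (z : C) : (conjc z) * z = (sq z)%:C.
Proof. by case: z => u v; apply/eqP; rewrite eq_complex /sq /=; apply/andP; split; apply/eqP; ring. Qed.

Lemma sq_ge0 z : 0 <= sq z.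
Proof. by rewrite /sq addr_ge0 ?sqr_ge0. Qed.

Definition alpha (psi : qbasis n -> C) (y : plabel n) : C :=
  \sum_(ab : qbasis n * qbasis n) (phi y ab)%:C * (psi ab.1 * psi ab.2).

Definition qd (psi : qbasis n -> C) (y : plabel n) : R := (2 ^+ n)^-1 * sq (alpha psi y).

Lemma alphaE psi y : alpha psi y = \sum_b \sum_b' (phi y (b, b'))%:C * (psi b * psi b').
Proof.
rewrite /alpha (pair_bigA _ (fun b b' => (phi y (b, b'))%:C * (psi b * psi b'))).
by apply: eq_bigr => -[].
Qed.

Lemma conjR (r : R) : (conjc (r%:C)) = r%:C.
Proof. by apply/eqP; rewrite eq_complex /= oppr0 !eqxx. Qed.

Lemma conjM (x y : C) : (conjc (x * y)) = (conjc x) * (conjc y).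
Proof. exact: rmorphM. Qed.

Lemma conj_sum (I : Type) (r : seq I) (F : I -> C) : (conjc (\sum_(i <- r) F i)) = \sum_(i <- r) (conjc (F i)).
Proof. exact: rmorph_sum. Qed.

Lemma conj_prod (I : Type) (r : seq I) (F : I -> C) : (conjc (\prod_(i <- r) F i)) = \prod_(i <- r) (conjc (F i)).
Proof. exact: rmorph_prod. Qed.

Lemma alphaCE psi y : (conjc (alpha psi y)) =
  \sum_a \sum_a' (phi y (a, a'))%:C * ((conjc (psi a)) * (conjc (psi a'))).
Proof.
rewrite alphaE rmorph_sum; apply: eq_bigr => a _.
rewrite rmorph_sum; apply: eq_bigr => a' _.
by rewrite !rmorphM; congr (_ * _); apply: conjR.
Qed.

Lemma expect2 psi (x : plabel n) :
  pauli_expect psi x ^+ 2 = (\sum_y qd psi y * lamx y x)%:C.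
Proof.
transitivity (\sum_a \sum_a' \sum_b \sum_b' ((conjc (psi a)) * (conjc (psi a'))) * (psi b * psi b') *
   ((2 ^+ n)^-1 * \sum_y lamx y x * phi y (a, a') * phi y (b, b'))%:C).
  rewrite /pauli_expect expr2 mulr_suml; apply: eq_bigr => a _.
  rewrite mulr_suml; under eq_bigr do rewrite mulr_sumr.
  rewrite exchange_big /=; apply: eq_bigr => a' _; apply: eq_bigr => b _.
  rewrite mulr_sumr; apply: eq_bigr => b' _.
  rewrite -entry2; ring.
symmetry; rewrite rmorph_sum.
transitivity (\sum_y ((2 ^+ n)^-1 * lamx y x)%:C * (\sum_a \sum_a' (phi y (a, a'))%:C * ((conjc (psi a)) * (conjc (psi a'))))
   * (\sum_b \sum_b' (phi y (b, b'))%:C * (psi b * psi b'))).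
  apply: eq_bigr => y _.
  rewrite -alphaCE -alphaE -mulrA conj_mul_sq -rmorphM /qd; congr (_%:C); ring.
under eq_bigr do rewrite expand4.
rewrite exch5; do 4! (apply: eq_bigr => ? _).
rewrite rmorphM rmorph_sum mulr_sumr [RHS]mulr_sumr; apply: eq_bigr => y _.
rewrite !rmorphM; ring.
Qed.

Definition x0 : plabel n := [ffun => (false, false)].

Lemma entry0 (a b : qbasis n) : pauli_entry R x0 a b = (a == b)%:R.
Proof.
rewrite /pauli_entry big1 ?expr0 ?mul1r; last by move=> i _; rewrite ffunE.
rewrite -prod_eq_ind; apply: eq_bigr => i _.
by rewrite ffunE /pauli1 /= addbF; case: (a i == b i).
Qed.

Lemma lamx0 y : lamx y x0 = 1.
Proof. by rewrite /lamx big1 // => i _; rewrite ffunE /lam1 /= expr0. Qed.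

Lemma qd_sum1 psi : is_pure_state psi -> \sum_y qd psi y = 1.
Proof.
move=> hp.
have := expect2 psi x0.
under [\sum_y _]eq_bigr do rewrite lamx0 mulr1.
have -> : pauli_expect psi x0 = 1.
  rewrite /pauli_expect -hp; apply: eq_bigr => a _.
  rewrite (bigD1 a) //= entry0 eqxx mulr1 big1 ?addr0 // => b hb.
  by rewrite entry0 eq_sym (negbTE hb) mulr0 mul0r.
by rewrite expr1n -(rmorph1 (real_complex R)) => /complexI.
Qed.

Lemma qd_ge0 psi y : 0 <= qd psi y.
Proof. by rewrite /qd mulr_ge0 ?sq_ge0 // invr_ge0 exprn_ge0. Qed.

Lemma phi_compl (ab ab' : qbasis n * qbasis n) :
  \sum_y phi y ab * phi y ab' = 2 ^+ n * (ab == ab')%:R.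
Proof.
case: ab ab' => a a' [b b'] /=; rewrite /phi /=.
under eq_bigr do rewrite -big_split /=.
rewrite -(bigA_distr_bigA (fun i t => b0 t (a i) (a' i) * b0 t (b i) (b' i))) /=.
under eq_bigr do rewrite b0_compl.
rewrite big_split /= prodr_const card_ord xpair_eqE natr_andb -!prod_eq_ind -big_split /=.
by congr (_ * _); apply: eq_bigr => i _; rewrite natr_andb.
Qed.

Variable N : nat.

Definition Phi (o : {ffun 'I_N -> plabel n}) (f : pairs_basis n N) : R :=
  \prod_j phi (o j) (f j).
Definition wN : R := ((2 ^+ n)^-1) ^+ N.
Definition Mv (o : {ffun 'I_N -> plabel n}) (f g : pairs_basis n N) : C :=
  (wN * Phi o f * Phi o g)%:C.

Lemma wN_ge0 : 0 <= wN.
Proof. by rewrite /wN exprn_ge0 // invr_ge0 exprn_ge0. Qed.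

Lemma quad_form o (v : pairs_basis n N -> C) :
  \sum_i \sum_j (conjc (v i)) * Mv o i j * v j =
  wN%:C * ((conjc (\sum_i (Phi o i)%:C * v i)) * (\sum_j (Phi o j)%:C * v j)).
Proof.
rewrite conj_sum big_distrl mulr_sumr; apply: eq_bigr => i _ /=.
rewrite mulr_sumr mulr_sumr; apply: eq_bigr => j _.
rewrite /Mv conjM conjR !rmorphM /=.
ring.
Qed.

Lemma Mv_povm : is_povm Mv.
Proof.
split.
  move=> o v; rewrite quad_form mulr_ge0 //; first by rewrite ler0c wN_ge0.
  by rewrite mulrC mulcJ_ge0.
move=> f g.
rewrite /Mv -(rmorph_nat (real_complex R)) -rmorph_sum; congr (_%:C).
under eq_bigr do rewrite -mulrA.
rewrite -mulr_sumr.
under eq_bigr do rewrite /Phi -big_split /=.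
rewrite -(bigA_distr_bigA (fun j y => phi y (f j) * phi y (g j))) /=.
under eq_bigr do rewrite phi_compl.
rewrite big_split /= prodr_const card_ord -prod_eq_ind /wN exprVn mulrA mulVf ?mul1r //.
by rewrite expf_neq0 // expf_neq0 // pnatr_eq0.
Qed.

Lemma alpha_prod psi o :
  \sum_(g : pairs_basis n N) (Phi o g)%:C * pairs_state psi g = \prod_j alpha psi (o j).
Proof.
rewrite /alpha bigA_distr_bigA /=; apply: eq_bigr => g _.
by rewrite /Phi /pairs_state rmorph_prod -big_split.
Qed.

Lemma prob_eq psi o : povm_prob Mv (pairs_state psi) o = (PP (qd psi) o)%:C.
Proof.
rewrite /povm_prob quad_form alpha_prod conj_prod -big_split /=.
under eq_bigr do rewrite conj_mul_sq.
rewrite -rmorph_prod -rmorphM; congr (_%:C).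
by rewrite /PP /qd big_split /= prodr_const card_ord.
Qed.

End Quantum.

Lemma prod_nat_bool (S : comPzRingType) (I : finType) (P : pred I) :
  \prod_i ((P i)%:R : S) = ([forall i, P i])%:R.
Proof.
case: forallP => [h|ne]; first by rewrite big1 // => i _; rewrite h.
have [i hi] : exists i, ~~ P i.
  apply/existsP; apply: contraT; rewrite negb_exists => /forallP h.
  by case: ne => i; have := h i; rewrite negbK.
by rewrite (bigD1 i) //= (negbTE hi) mul0r.
Qed.

Section Est.
Variable R : realType.
Local Notation C := R[i].
Variable n : nat.

Definition Xk (k : 'I_n.+1) (z : {ffun 'I_k -> bool * bool}) (y : plabel n) : R :=
  (2 ^+ n)^-1 * \sum_(x : plabel n | pauli_prefix k x == z) lamx R y x.

Arguments Xk : clear implicits.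

Lemma marginalE (psi : qbasis n -> C) k x :
  pauli_marginal psi k x = \sum_y qd psi y * Xk k (pauli_prefix k x) y.
Proof.
rewrite /pauli_marginal /pauli_dist /Xk.
under eq_bigr do rewrite expect2 /=.
under [RHS]eq_bigr do rewrite mulr_sumr mulr_sumr.
rewrite [RHS]exchange_big /=; apply: eq_bigr => x' _.
rewrite mulr_suml; apply: eq_bigr => y _; ring.
Qed.

Definition zext (k : 'I_n.+1) (z : {ffun 'I_k -> bool * bool}) (i : 'I_n) : bool * bool :=
  if insub (val i) is Some j then z j else (false, false).

Lemma prefix_eq (k : 'I_n.+1) (z : {ffun 'I_k -> bool * bool}) (x : plabel n) :
  (pauli_prefix k x == z) = [forall i : 'I_n, (i < k)%N ==> (x i == zext z i)].
Proof.
apply/eqP/forallP.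
  move=> <- i; apply/implyP => hi; rewrite /zext.
  case: insubP => [j _ ej|]; last by rewrite hi.
  by rewrite ffunE; apply/eqP; congr (x _); apply: val_inj.
move=> h; apply/ffunP => j; rewrite ffunE.
set i := widen_ord _ j.
have := h i; rewrite /= ltn_ord /= /zext.
case: insubP => [j' _ ej'|]; last by rewrite /= ltn_ord.
by move/eqP => ->; congr (z _); apply: val_inj.
Qed.

Lemma lam1_sum t : `|\sum_p lam1 R t p| = 2 :> R.
Proof.
rewrite sum_bb; case: t => [[] []]; rewrite /lam1 /=.
- by rewrite (_ : _ + _ = -2 :> R) ?normrN ?normr_nat //; ring.
- by rewrite (_ : _ + _ = 2 :> R) ?normr_nat //; ring.
- by rewrite (_ : _ + _ = 2 :> R) ?normr_nat //; ring.
- by rewrite (_ : _ + _ = 2 :> R) ?normr_nat //; ring.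
Qed.

Lemma prod_pow2 (k : nat) : (k <= n)%N ->
  \prod_(i < n) (if (i < k)%N then 1 else 2) = 2 ^+ (n - k) :> R.
Proof.
move=> hk.
rewrite -(big_mkord xpredT (fun i => if (i < k)%N then 1 else 2)).
rewrite (big_cat_nat (leq0n k) hk) /=.
rewrite big_nat_cond big1 ?mul1r; last by move=> i /andP[/andP[_ ->]].
rewrite -(prodr_const_nat k n 2) big_nat_cond [RHS]big_nat_cond.
by apply: eq_bigr => i /andP[/andP[h _] _]; rewrite ltnNge h.
Qed.

Lemma Xk_bound (k : 'I_n.+1) z y : `|Xk k z y| <= (2 ^+ k)^-1.
Proof.
rewrite /Xk normrM ger0_norm ?invr_ge0 ?exprn_ge0 //.
have -> : \sum_(x : plabel n | pauli_prefix k x == z) lamx R y x =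
   \prod_(i < n) \sum_(p : bool * bool) (((i < k)%N ==> (p == zext z i))%:R * lam1 R (y i) p).
  rewrite bigA_distr_bigA /= big_mkcond /=; apply: eq_bigr => x _.
  rewrite big_split /= prod_nat_bool prefix_eq /lamx.
  by case: [forall _, _]; rewrite ?mul1r ?mul0r.
rewrite normr_prod.
have hk : (k <= n)%N by rewrite -ltnS ltn_ord.
apply: (le_trans (y := (2 ^+ n)^-1 * \prod_(i < n) (if (i < k)%N then 1 else 2))).
  rewrite ler_wpM2l ?invr_ge0 ?exprn_ge0 //.
  apply: ler_prod => i _; rewrite normr_ge0 /=.
  case: ifP => hi.
    rewrite (bigD1 (zext z i)) //= eqxx mul1r big1 ?addr0; last first.
      by move=> p hp; rewrite (negbTE hp) mul0r.
    by rewrite /lam1 normrX normrN normr1 expr1n.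
  by under eq_bigr do rewrite mul1r; rewrite lam1_sum.
have e : 2 ^+ n = 2 ^+ k * 2 ^+ (n - k) :> R by rewrite -exprD subnKC.
rewrite prod_pow2 // e invfM -mulrA mulVf ?mulr1 //.
by rewrite expf_neq0 // pnatr_eq0.
Qed.

End Est.

Lemma nat_count m : (2 * (4 ^ m.+1 * m.+2) <= 2 ^ (5 * m.+1 - 1))%N.
Proof.
elim: m => [//|m IH].
have -> : (5 * m.+2 - 1 = (5 * m.+1 - 1) + 5)%N by lia.
rewrite expnD.
have -> : (4 ^ m.+2 = 4 ^ m.+1 * 4)%N by rewrite expnS mulnC.
have h : (m.+3 <= 2 * m.+2)%N by lia.
apply: (leq_trans _ (leq_mul IH (leqnn _))).
rewrite (_ : 2 ^ 5 = 32)%N //.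
have := leq_mul (leqnn (2 * 4 ^ m.+1 * 4)) h.
nia.
Qed.

Lemma union_bound (R : realType) (T E : finType) (w : T -> R) (bad : pred T) (B : E -> pred T) :
  (forall t, 0 <= w t) -> (forall t, bad t -> exists e, B e t) ->
  \sum_(t | bad t) w t <= \sum_e \sum_(t | B e t) w t.
Proof.
move=> w0 hb.
rewrite [X in _ <= X](exchange_big_dep xpredT) //= big_mkcond /=.
apply: ler_sum => t _.
case: ifP => bt; last by apply: sumr_ge0 => e _.
have [e he] := hb t bt.
rewrite (bigD1 e) //= lerDl.
by apply: sumr_ge0 => e' _.
Qed.

Lemma numeric (R : realType) (n N : nat) (delta eps : R) :
  (0 < n)%N -> 0 < delta -> delta <= 1/2 -> 0 < eps ->
  160 * n%:R * ln (delta^-1) / eps ^+ 2 <= N%:R ->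
  (2 * expR (- (N%:R * eps ^+ 2 / 32))) *+ (4 ^ n * n.+1) <= delta.
Proof.
move=> hn hd hd2 he hN.
set L := ln (delta^-1).
have e2 : 0 < eps ^+ 2 by rewrite exprn_gt0.
have h1 : expR (- (N%:R * eps ^+ 2 / 32)) <= expR (- ((5 * n)%:R * L)).
  rewrite ler_expR lerN2 natrM.
  move: hN; rewrite ler_pdivrMr // => hN.
  rewrite ler_pdivlMr //.
  by rewrite (_ : 5%:R * n%:R * L * 32 = 160 * n%:R * L) //; ring.
have h2 : expR (- ((5 * n)%:R * L)) = delta ^+ (5 * n).
  rewrite -mulrN expRM_natl /L lnV ?posrE // opprK lnK //.
have h3 : delta ^+ (5 * n) <= delta * (1/2) ^+ (5 * n - 1).
  have -> : (5 * n = (5 * n - 1).+1)%N by lia.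
  rewrite exprS ler_wpM2l ?(ltW hd) // subSS subn0.
  have := @lerXn2r R (5 * n - 1) delta (1/2); rewrite !nnegrE; apply => //; lra.
have hc : (2 * (4 ^ n * n.+1) <= 2 ^ (5 * n - 1))%N.
  by clear -hn; case: n hn => // m _; apply: nat_count.
apply: (le_trans (y := (2 * (delta * (1/2) ^+ (5 * n - 1))) *+ (4 ^ n * n.+1))).
  rewrite lerMn2r; apply/orP; right.
  by rewrite ler_wpM2l // (le_trans h1) // h2.
have -> : (1/2 : R) ^+ (5 * n - 1) = (2 ^+ (5 * n - 1))^-1 by rewrite expr_div_n expr1n div1r.
rewrite -mulr_natr.
set t := (2 ^+ (5 * n - 1))^-1.
have -> : 2 * (delta * t) * (4 ^ n * n.+1)%:R = delta * ((2 * (4 ^ n * n.+1))%:R * t).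
  by rewrite (natrM _ 2); ring.
rewrite -{2}(mulr1 delta) ler_wpM2l ?(ltW hd) // /t.
rewrite ler_pdivrMr ?mul1r ?exprn_gt0 // -natrX ler_nat //.
Qed.

Lemma mu_bound (R : realType) (n : nat) (psi : qbasis n -> R[i]) (k : 'I_n.+1)
  (z : {ffun 'I_k -> bool * bool}) :
  is_pure_state psi -> `|\sum_y qd psi y * Xk R z y| <= (2 ^+ k)^-1.
Proof.
move=> hp; apply: (le_trans (ler_norm_sum _ _ _)).
apply: (le_trans (y := \sum_y qd psi y * (2 ^+ k)^-1)).
  apply: ler_sum => y _; rewrite normrM ger0_norm ?qd_ge0 //.
  by rewrite ler_wpM2l ?qd_ge0 ?Xk_bound.
by rewrite -mulr_suml qd_sum1 // mul1r.
Qed.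

Lemma compl_bound (R : realType) (T : finType) (w : T -> R) (P : pred T) (d : R) :
  \sum_t w t = 1 -> \sum_(t | ~~ P t) w t <= d -> 1 - d <= \sum_(t | P t) w t.
Proof. by rewrite (bigID P) /= => <- h; lra. Qed.

Theorem lemma12 (R : realType) :
  exists Cst : R, 0 < Cst /\
  forall (n : nat) (eps delta : R),
    (0 < n)%N -> 0 < eps -> 0 < delta -> delta <= 1 / 2 ->
    exists N : nat,
      N%:R <= Cst * n%:R * ln (delta^-1) / eps ^+ 2 /\
      exists (O : finType)
             (M : O -> pairs_basis n N -> pairs_basis n N -> R[i])
             (est : O -> forall k : 'I_n.+1, {ffun 'I_k -> bool * bool} -> R),
        is_povm M /\
        forall psi : qbasis n -> R[i], is_pure_state psi ->
          (1 - delta)%:C <=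
            \sum_(o : O | [forall x : plabel n, forall k : 'I_n.+1,
                     (0 < k)%N ==>
                     (`|est o k (pauli_prefix k x) - pauli_marginal psi k x|
                        <= eps / 2 ^+ (nat_of_ord k))])
              povm_prob M (pairs_state (N := N) psi) o.
Proof.
exists 168; split; first by rewrite ltr0n.
move=> n eps delta hn he hd hd2.
have hdi : 2 <= delta^-1.
  have : (1/2)^-1 <= delta^-1 by rewrite lef_pV2 ?posrE //; lra.
  by rewrite div1r invrK.
have hL : 1/2 <= ln (delta^-1).
  have h : expR (1/2) <= delta^-1 :> R.
    apply: (le_trans (exp_bound (lexx _))).
    by apply: le_trans hdi; rewrite (_ : 1 + 1/2 + 2 * (1/2) ^+ 2 = 2 :> R) //; field.
  by rewrite -(expRK (1/2)) ler_ln ?posrE ?expR_gt0 // (lt_le_trans _ hdi).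
have hn' : (1 : R) <= n%:R by rewrite ler1n.
have e2 : 0 < eps ^+ 2 by rewrite exprn_gt0.
case: (ltP eps 2) => he2.
  set x := 160 * n%:R * ln (delta^-1) / eps ^+ 2.
  have x0 : 0 <= x by rewrite /x divr_ge0 ?(ltW e2) // !mulr_ge0 //; lra.
  have /andP[t1 t2] := truncn_itv x0.
  exists (Num.truncn x).+1; split.
    apply: (le_trans (y := x + 1)); first by rewrite -addn1 natrD lerD2r.
    have h8 : 1 <= 8 * n%:R * ln (delta^-1) / eps ^+ 2.
      rewrite ler_pdivlMr // mul1r.
      have : 1 / 2 <= n%:R * ln (delta^-1) by nra.
      nra.
    have -> : 168 * n%:R * ln (delta^-1) / eps ^+ 2 = x + 8 * n%:R * ln (delta^-1) / eps ^+ 2.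
      by rewrite /x; field; rewrite gt_eqF.
    by rewrite lerD2l.
  set N := (Num.truncn x).+1.
  exists {ffun 'I_N -> plabel n}, (@Mv R n N),
    (fun (o : {ffun 'I_N -> plabel n}) (k : 'I_n.+1) (z : {ffun 'I_k -> bool * bool}) => N%:R^-1 * \sum_(j < N) Xk R z (o j)).
  split; first exact: Mv_povm.
  move=> psi hpsi.
  rewrite (eq_bigr _ (fun o _ => prob_eq psi o)) -rmorph_sum lecR.
  apply: compl_bound; first exact: PP_sum1 (qd_sum1 hpsi) _.
  have UB := (@union_bound R _ ((plabel n * 'I_n.+1)%type) _ _
     (fun (e : (plabel n * 'I_n.+1)%type) (o : {ffun 'I_N -> plabel n}) =>
        eps * (2 ^+ e.2)^-1 < `|N%:R^-1 * \sum_j Xk R (pauli_prefix e.2 e.1) (o j)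
                                - \sum_y qd psi y * Xk R (pauli_prefix e.2 e.1) y|)
     (fun t => PP_ge0 (qd_ge0 psi) t)).
  apply: (le_trans (UB _ _)).
    move=> o /forallPn [y /forallPn [k]]; rewrite negb_imply => /andP[_ h].
    by exists (y, k); rewrite /= -marginalE ltNge.
  apply: (le_trans (y := \sum_(e : (plabel n * 'I_n.+1)%type) 2 * expR (- (N%:R * eps ^+ 2 / 32)))).
    apply: ler_sum => -[y k] _ /=.
    apply: (deviation (qd_ge0 psi) (qd_sum1 hpsi)) => //.
    - by rewrite invr_gt0 exprn_gt0.
    - by move=> y'; apply: Xk_bound.
    - by rewrite he (ltW he2).
  rewrite sumr_const card_prod card_ffun !card_ord card_prod card_bool.
  apply: numeric => //.
  exact: ltW t2.
exists 0%N; split.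
  by rewrite divr_ge0 ?(ltW e2) // !mulr_ge0 //; lra.
exists {ffun 'I_0 -> plabel n}, (@Mv R n 0),
  (fun (o : {ffun 'I_0 -> plabel n}) (k : 'I_n.+1) (z : {ffun 'I_k -> bool * bool}) => 0%:R^-1 * \sum_(j < 0) Xk R z (o j)).
split; first exact: Mv_povm.
move=> psi hpsi.
rewrite (eq_bigr _ (fun o _ => prob_eq psi o)) -rmorph_sum lecR.
apply: compl_bound; first exact: PP_sum1 (qd_sum1 hpsi) _.
rewrite big1 ?(ltW hd) // => o /forallPn [y /forallPn [k]]; rewrite negb_imply => /andP[_ h].
exfalso; move: h; apply/negP/negPn.
rewrite big_ord0 mulr0 sub0r normrN marginalE.
apply: (le_trans (mu_bound _ hpsi)).
rewrite -[X in X <= _]mul1r ler_wpM2r ?invr_ge0 ?exprn_ge0 //; lra.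
Qed.
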